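(* Let $n\ge3$ and equip $\mathcal{H}_n$ with the word metric for the generating set $\{g_1,\dots,g_{n-1}\}$. For $k\in\mathbb{N}$ let $B_k$ be the ball of radius $k$ about the identity, $C_k$ the set of elements of $\mathcal{H}_n$ of complexity exactly $k$, and $D_k\subseteq C_k$ the set of elements of $C_k$ of word length at most $k\log_{2n-2}k$. Then $$\lim_{k\to\infty}\frac{|D_k|}{|C_k|}=0.$$
   Context: Let $\mathbb{N}=\{1,2,3,\dots\}$, $\mathbb{Z}_n$ the integers modulo $n$, $R_n=\mathbb{Z}_n\times\mathbb{N}$ (ray $i$ is $\{(i,k):k\in\mathbb{N}\}$). Permutations act on the right. The Houghton group $\mathcal{H}_n$ is the group of permutations $\sigma$ of $R_n$ for which there exist $N\ge0$ and integers $t_i(\sigma)$ with $(i,k)\sigma=(i,k+t_i(\sigma))$ for all $i\in\mathbb{Z}_n$, $k\ge N$. For distinct $i,j$, $g_{ij}\in\mathcal{H}_n$ is given by $(i,m)g_{ij}=(i,m-1)$ for $m>1$, $(i,1)g_{ij}=(j,1)$, $(j,m)g_{ij}=(j,m+1)$ for $m\ge1$, fixing all points on other rays; $g_i=g_{i\,i+1}$. For $\sigma\in\mathcal{H}_n$ and $i\in\mathbb{Z}_n$, $p_i(\sigma)$ is the largest integer $k\ge1$ with $(i,k)\sigma\ne(i,k+t_i(\sigma))$ (automatically true if $k+t_i(\sigma)\le0$), and $0$ if no such $k$ exists; the complexity is $P(\sigma)=\sum_i p_i(\sigma)$. *)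

(* Defs.v *)
From Stdlib Require Import Reals ZArith.
From mathcomp Require Import all_boot.
Set Implicit Arguments. Unset Strict Implicit. Unset Printing Implicit Defensive.

(* Points of R_n = Z_n x N.  CONVENTION: the pair (i, m) with m : nat
   represents the point (i, m+1) of the paper (heights are shifted by one). *)
Definition pt (n : nat) := ('I_n * nat)%type.

(* g_{ij} (for i <> j): (i,k) -> (i,k-1) for k > 1, (i,1) -> (j,1),
   (j,k) -> (j,k+1), other points fixed.  In shifted coordinates: *)
Definition gij n (i j : 'I_n) (x : pt n) : pt n :=
  let: (l, m) := x in
  if l == i then (if m is m'.+1 then (i, m') else (j, 0%N))
  else if l == j then (j, m.+1) else (l, m).

Definition gi n (i : 'I_n) : pt n -> pt n := gij i (ordS i).

Definition translates n (s : pt n -> pt n) (t : 'I_n -> Z) (i : 'I_n) (m : nat) :=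
  exists m' : nat, Z.of_nat m' = (Z.of_nat m + t i)%Z /\ s (i, m) = (i, m').

Definition eventual_trans n (s : pt n -> pt n) (t : 'I_n -> Z) :=
  exists N : nat, forall (i : 'I_n) (m : nat), (N <= m)%N -> translates s t i m.

Definition inH n (s : pt n -> pt n) :=
  bijective s /\ exists t, eventual_trans s t.

(* p_i(s) = p : largest k >= 1 with (i,k)s <> (i,k+t_i) (true if k+t_i <= 0),
   0 if there is none.  (k = m+1 in shifted coordinates.) *)
Definition pcomp n (s : pt n -> pt n) (t : 'I_n -> Z) (i : 'I_n) (p : nat) :=
  (forall m : nat, (p <= m)%N -> translates s t i m) /\
  ((0 < p)%N -> ~ translates s t i p.-1).

Definition complexity_is n (s : pt n -> pt n) (k : nat) :=
  exists (t : 'I_n -> Z) (p : 'I_n -> nat),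
    eventual_trans s t /\ (forall i, pcomp s t i (p i)) /\ (\sum_(i < n) p i)%N = k.

(* Words in {g_1,...,g_{n-1}}^{+-1}; permutations act on the right, so the
   product s * h is "first s, then h" = h \o s. *)
Definition gen_letter n (h : pt n -> pt n) :=
  exists a : 'I_n, (0 < a)%N /\
    (h = gi a \/ ((forall x, h (gi a x) = x) /\ (forall x, gi a (h x) = x))).

Inductive word_of n : (pt n -> pt n) -> nat -> Prop :=
| word_nil : word_of (fun x => x) 0
| word_cons s L h : word_of s L -> gen_letter h -> word_of (fun x => h (s x)) L.+1.

Definition wordlen_le n (s : pt n -> pt n) (r : R) :=
  exists L : nat, word_of s L /\ Rle (INR L) r.

Definition Cset n (k : nat) (s : pt n -> pt n) := inH s /\ complexity_is s k.
Definition Dset n (k : nat) (s : pt n -> pt n) :=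
  Cset k s /\ wordlen_le s (Rmult (INR k) (Rdiv (ln (INR k)) (ln (INR (2 * n - 2)%N)))).

Definition has_card T (A : T -> Prop) (c : nat) :=
  exists f : 'I_c -> T, injective f /\ (forall x, A x <-> exists i, f i = x).

(* Main.v *)
Require Import Defs.
From Stdlib Require Import Reals ZArith Lia Lra.
From Stdlib Require Import Classical ClassicalEpsilon FunctionalExtensionality.
From mathcomp Require Import all_boot fingroup perm zify.
Set Implicit Arguments. Unset Strict Implicit. Unset Printing Implicit Defensive.
Definition i0_elim T (i : 'I_0) : T.
Proof. by case: i. Defined.

Lemma has_card_list (T : Type) (l : list T) : forall (P : T -> Prop),
  (forall x, P x -> List.In x l) -> exists c, (c <= size l)%N /\ has_card P c.
Proof.
elim: l => [|y l IH] P HP.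
  exists 0; split=> //; exists (@i0_elim T); split; first by move=> i; case: i.
  split; last by case=> i; case: i.
  by move=> /HP.
pose P' x := P x /\ x <> y.
have [|c' [Hc' [e' [ie' He']]]] := IH P'.
  move=> x [/HP /= [->|//] //].
have [Py|nPy] := classic (P y).
- exists c'.+1; split; first by [].
  exists (fun i : 'I_c'.+1 => match unlift ord_max i with Some j => e' j | None => y end).
  split.
    move=> i1 i2.
    case: unliftP => [j1 ->|->]; case: unliftP => [j2 ->|->] //.
    + by move/ie' ->.
    + by move=> E; by have [_ []] := proj2 (He' (e' j1)) (ex_intro _ j1 erefl).
    + by move=> E; have [_ []] := proj2 (He' (e' j2)) (ex_intro _ j2 erefl).
  move=> x; split.
    move=> Px; have [->|nxy] := classic (x = y).
      by exists ord_max; rewrite unlift_none.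
    have [j Ej] := proj1 (He' x) (conj Px nxy).
    by exists (lift ord_max j); rewrite liftK.
  case=> i; case: unliftP => [j _ <-|_ <-] //.
  by have [] := proj2 (He' (e' j)) (ex_intro _ j erefl).
- exists c'; split; first by apply: leqW.
  exists e'; split=> // x; split.
    by move=> Px; apply/He'; split=> // E; apply: nPy; rewrite -E.
  by move=> /He' [].
Qed.

Lemma has_card_fin (D : finType) (T : Type) (P : T -> Prop) (f : D -> T) :
  (forall x, P x -> exists y, f y = x) -> exists c, (c <= #|D|)%N /\ has_card P c.
Proof.
move=> H.
have [|c [Hc Hcard]] := @has_card_list T (map f (enum D)) P.
  move=> x /H [y <-]; apply: List.in_map.
  have : y \in enum D by rewrite mem_enum.
  elim: (enum D) => //= z s IHs; rewrite in_cons => /orP [/eqP ->|/IHs]; by [left|right].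
by exists c; rewrite size_map -cardT in Hc.
Qed.

Lemma card_lower (D : finType) (T : Type) (P : T -> Prop) (h : D -> T) c :
  has_card P c -> (forall y, P (h y)) -> injective h -> (#|D| <= c)%N.
Proof.
move=> [e [ie He]] Ph ih.
have Hy : forall y, exists i, e i = h y by move=> y; apply/He.
pose g y := proj1_sig (constructive_indefinite_description _ (Hy y)).
have gP y : e (g y) = h y by rewrite /g; case: constructive_indefinite_description.
have ig : injective g by move=> y1 y2 E; apply: ih; rewrite -!gP E.
by have := leq_card g ig; rewrite card_ord.
Qed.

Lemma has_card_uniq T (P : T -> Prop) c1 c2 : has_card P c1 -> has_card P c2 -> c1 = c2.
Proof.
move=> H1 H2; apply/eqP; rewrite eqn_leq.
have [e1 [i1 He1]] := H1; have [e2 [i2 He2]] := H2.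
apply/andP; split.
  by have := card_lower H2 (fun y => proj2 (He1 _) (ex_intro _ y erefl)) i1; rewrite card_ord.
by have := card_lower H1 (fun y => proj2 (He2 _) (ex_intro _ y erefl)) i2; rewrite card_ord.
Qed.
Section Fin.
Variable n : nat.

Lemma Cset_struct k (s : pt n -> pt n) : Cset k s ->
  exists t : 'I_n -> Z, (forall i m, (k <= m)%N -> translates s t i m) /\ bijective s.
Proof.
move=> [[bs _] [t [p [_ [Hp Hsum]]]]].
exists t; split=> // i m km; apply: (proj1 (Hp i)).
apply: leq_trans km; rewrite -Hsum (bigD1 i) //=; exact: leq_addr.
Qed.

Definition BB k := (k + n * k)%N.

Definition decC k (x : {ffun 'I_n * 'I_k -> 'I_n * 'I_(BB k).+1} * {ffun 'I_n -> 'I_(BB k).+1})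
  (p : pt n) : pt n :=
  let: (i, m) := p in
  match (insub m : option 'I_k) with
  | Some mo => let: (j, v) := x.1 (i, mo) in (j, val v)
  | None => (i, (m + val (x.2 i) - k)%N)
  end.

Lemma t_lower k (s : pt n -> pt n) t i :
  (forall i m, (k <= m)%N -> translates s t i m) -> (- Z.of_nat k <= t i)%Z.
Proof. move=> H; have [m' [E _]] := H i k (leqnn k); lia. Qed.

Lemma t_upper k (s : pt n -> pt n) t i :
  (forall i m, (k <= m)%N -> translates s t i m) -> bijective s ->
  (t i <= Z.of_nat (n * k))%Z.
Proof.
move=> H [g sg gs].
have [//|] := Z.le_gt_cases (t i) (Z.of_nat (n * k)) => lt.
exfalso.
have small : forall x : 'I_(n * k).+1, (( g (i, val x)).2 < k)%N.
  move=> x; case E: (g (i, val x)) => [j m] /=.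
  rewrite ltnNge; apply/negP => km.
  have [m' [Em' Es]] := H j m km.
  have := gs (i, val x); rewrite E Es => -[ej ex].
  subst j; have := ltn_ord x; lia.
case: k H small lt => [|k] H small lt.
  by have := small ord0; rewrite ltn0.
pose h (x : 'I_(n * k.+1).+1) : 'I_n * 'I_k.+1 := ((g (i, val x)).1, inord (g (i, val x)).2).
have ih : injective h.
  move=> x1 x2 [E1 E2].
  have E : g (i, val x1) = g (i, val x2).
    move: E1 E2 (small x1) (small x2).
    case: (g (i, val x1)) => a b; case: (g (i, val x2)) => a' b' /= -> h2 h1 h1'.
    by have := congr1 (@nat_of_ord _) h2; rewrite !inordK // => ->.
  by apply: ord_inj; have := congr1 s E; rewrite !gs => -[].
have := leq_card h ih; rewrite card_prod !card_ord; lia.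
Qed.

Lemma value_bound k (s : pt n -> pt n) t i m :
  (forall i m, (k <= m)%N -> translates s t i m) -> bijective s -> (m < k)%N ->
  ((s (i, m)).2 < BB k)%N.
Proof.
move=> H bs mk; have [g sg gs] := bs.
case E: (s (i, m)) => [j m''] /=.
have tu := t_upper (i:=j) H bs.
rewrite /BB ltnNge; apply/negP => ge.
have [//|] := Z.le_gt_cases (Z.of_nat m'') (Z.of_nat k + t j - 1) => lt.
  lia.
have km0 : (k <= Z.to_nat (Z.of_nat m'' - t j))%N by lia.
have [m0' [Em0 Es]] := H j _ km0.
have Em0' : m0' = m'' by lia.
subst m0'.
have := congr1 g Es; rewrite -E !sg => -[_ e]; lia.
Qed.

Lemma decC_surj k (s : pt n -> pt n) : Cset k s -> exists x, @decC k x = s.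
Proof.
move=> /Cset_struct [t [H bs]].
exists ([ffun y : 'I_n * 'I_k => ((s (y.1, val y.2)).1, inord (s (y.1, val y.2)).2)],
        [ffun i => inord (Z.to_nat (t i + Z.of_nat k))]).
apply: functional_extensionality => -[i m] /=.
case: insubP => [mo mk Emo|].
  rewrite ffunE /= Emo inordK; first by case: (s _).
  by rewrite ltnS; apply: ltnW; exact: (@value_bound k s t i m H bs mk).
rewrite -leqNgt => km.
have [m' [Em' ->]] := H i m km.
have tl := t_lower (i:=i) H; have tu := t_upper (i:=i) H bs; rewrite ffunE inordK; rewrite /BB; [congr pair|]; lia.
Qed.

End Fin.
Section Fam.
Variables (n : nat) (r0 : 'I_n) (j : nat).

Definition sfam (tau : {perm 'I_j}) (p : pt n) : pt n :=
  let: (i, m) := p in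
  if i == r0 then
    match (insub m : option 'I_j) with
    | Some mo => (r0, (tau mo).+1)
    | None => if m == j then (r0, 0%N) else (r0, m)
    end
  else (i, m).

Definition gfam (tau : {perm 'I_j}) (p : pt n) : pt n :=
  let: (i, m) := p in
  if i == r0 then
    match m with
    | m1.+1 => match (insub m1 : option 'I_j) with
               | Some mo => (r0, nat_of_ord ((tau^-1)%g mo))
               | None => (r0, m)
               end
    | 0 => (r0, j)
    end
  else (i, m).

Lemma sfam_bij tau : bijective (sfam tau).
Proof.
exists (gfam tau) => -[i m].
- rewrite /sfam; case: eqP => [->|ne]; last by rewrite /gfam; move/eqP: ne => /negPf ->.
  case: insubP => [mo mj Emo|].
    rewrite /gfam eqxx; case: insubP => [mo' _ E|]; last by rewrite ltn_ord.
    have -> : mo' = tau mo by apply: val_inj.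
    by rewrite permK Emo.
  rewrite -leqNgt => jm; case: eqP => [->|ne]; first by rewrite /gfam eqxx.
  rewrite /gfam eqxx; case: m jm ne => [|m1] jm ne /=.
    by move: jm; rewrite leqn0 => /eqP E; case: ne.
  case: insubP => [mo' H _|//]; exfalso; move: jm ne H.
  lia.
- rewrite /gfam; case: eqP => [->|ne]; last by rewrite /sfam; move/eqP: ne => /negPf ->.
  case: m => [|m1] /=.
    by rewrite /sfam eqxx; case: insubP => [mo'|_]; [rewrite ltnn | rewrite eqxx].
  case: insubP => [mo H Emo|].
    rewrite /sfam eqxx; case: insubP => [mo' _ E|]; last by rewrite ltn_ord.
    have -> : mo' = (tau^-1)%g mo by apply: val_inj.
    by rewrite permKV Emo.
  rewrite -leqNgt => jm; rewrite /sfam eqxx; case: insubP => [mo' H _|_].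
    by move: H; rewrite ltnNge (leqW jm).
  by case: eqP => // E; move: jm; rewrite -E ltnn.
Qed.

Hypothesis j1 : (0 < j)%N.

Lemma sfam_C tau : Cset j.+1 (sfam tau).
Proof.
have tr : forall i m, (j.+1 <= m)%N -> translates (sfam tau) (fun _ => 0%Z) i m.
  move=> i m jm; exists m; split; first by lia.
  rewrite /=; case: eqP => [->|//].
  case: insubP => [mo H _|_]; first by move: H; rewrite ltnNge (ltnW jm).
  by case: eqP => // E; move: jm; rewrite E ltnn.
split.
  split; first exact: sfam_bij.
  by exists (fun _ => 0%Z), j.+1.
exists (fun _ => 0%Z), (fun i => if i == r0 then j.+1 else 0%N).
split; first by exists j.+1.
split.
  move=> i; split.
    move=> m; case: eqP => [->|ne] jm; first exact: tr.
    exists m; split; first by lia.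
    by rewrite /=; case: eqP.
  case: eqP => [->|//] _ [m' [E Es]].
  move: Es; rewrite /=  eqxx.
  case: insubP => [mo H _|_]; first by move: H; rewrite ltnn.
  rewrite eqxx => -[E']; subst m'; lia.
rewrite (bigD1 r0) //= eqxx big1 ?addn0 // => i /negPf ->; done.
Qed.

Lemma sfam_inj : injective sfam.
Proof.
move=> t1 t2 E; apply/permP => mo.
have := congr1 (fun f => f (r0, nat_of_ord mo)) E.
rewrite /= eqxx; case: insubP => [mo' _ E'|]; last by rewrite ltn_ord.
have -> : mo' = mo by apply: val_inj.
by move=> [] /val_inj.
Qed.

End Fam.
Lemma gij_inv n (i j : 'I_n) : i != j -> forall x, gij j i (gij i j x) = x.
Proof.
move=> ne [l m] /=.
case: (eqVneq l i) => [->|nli].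
  case: m => [|m] /=; first by rewrite eqxx.
  by rewrite (negPf ne) eqxx.
case: (eqVneq l j) => [->|nlj] /=.
  by rewrite eqxx.
by rewrite (negPf nlj) (negPf nli).
Qed.

Section Words.
Variable n' : nat.
Hypothesis hn' : (0 < n')%N.
Local Notation N := n'.+1.

Definition Lt := ('I_n' * bool)%type.
Definition gen (a : 'I_n') : 'I_N := lift ord0 a.
Definition ginv (a : 'I_N) := gij (ordS a) a.
Definition act (x : Lt) : pt N -> pt N := if x.2 then ginv (gen x.1) else gi (gen x.1).
Definition inv (x : Lt) : Lt := (x.1, ~~ x.2).

Lemma ordS_neq (a : 'I_N) : a != ordS a.
Proof.
apply/eqP => /(congr1 val) /=; case: a => a /= ha.
have : (1 < N)%N by lia.
case: (ltngtP a.+1 N) => h.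
- by rewrite modn_small //; lia.
- lia.
- by rewrite h modnn; lia.
Qed.

Lemma act_inv x p : act (inv x) (act x p) = p.
Proof.
case: x => a [] /=; rewrite /act /= /ginv /gi.
- apply: gij_inv; rewrite eq_sym; exact: ordS_neq.
- apply: gij_inv; exact: ordS_neq.
Qed.

Lemma invK x : inv (inv x) = x. Proof. by case: x => a []. Qed.

Fixpoint eval (w : seq Lt) : pt N -> pt N :=
  match w with
  | [::] => fun p => p
  | x :: w' => fun p => act x (eval w' p)
  end.

Lemma letter_act (h : pt N -> pt N) : gen_letter h -> exists x, h = act x.
Proof.
move=> [a [a0 H]].
case: (unliftP ord0 a) => [a' Ea|Ea]; last by move: a0; rewrite Ea.
case: H => [->|[H1 H2]]; first by exists (a', false); rewrite /act /= Ea.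
exists (a', true); rewrite /act /gen /= -Ea; apply: functional_extensionality => y.
have := H1 (ginv a y); rewrite (_ : gi a (ginv a y) = y) // => {H1 H2}.
have := act_inv (a', true) y; rewrite /act /gen /= -Ea //.
Qed.

Lemma word_eval s L : word_of s L -> exists w, size w = L /\ s = eval w.
Proof.
elim=> [|s0 L0 h _ [w [Hw ->]] /letter_act [x ->]]; first by exists [::].
by exists (x :: w); rewrite /= Hw.
Qed.

Definition rr (x y : Lt) := y != inv x.

Fixpoint red (w : seq Lt) : seq Lt :=
  match w with
  | [::] => [::]
  | x :: w' => match red w' with
               | y :: w'' => if y == inv x then w'' else x :: y :: w''
               | [::] => [:: x]
               end
  end.

Lemma red_props w : [/\ sorted rr (red w), (size (red w) <= size w)%N & eval (red w) =1 eval w].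
Proof.
elim: w => [|x w [IH1 IH2 IH3]] //=.
case E: (red w) IH1 IH2 IH3 => [|y w''] IH1 IH2 IH3 /=.
  by split=> // p; rewrite /= -IH3.
case: eqP => [Ey|ney].
  split; first exact: path_sorted IH1.
    by move: IH2 => /=; lia.
  by move=> p; rewrite -IH3 /= Ey -{1}(invK x) act_inv.
split; first by rewrite /= /rr; apply/andP; split=> //; apply/eqP.
  by move: IH2 => /=; lia.
by move=> p; rewrite -IH3.
Qed.

Definition nxt (x : Lt) (c : 'I_#|{: Lt}|.-1) : Lt := enum_val (lift (enum_rank (inv x)) c).

Fixpoint dec (x : Lt) (cs : seq 'I_#|{: Lt}|.-1) : seq Lt :=
  match cs with
  | [::] => [:: x]
  | c :: cs' => x :: dec (nxt x c) cs'
  end.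

Lemma dec_surj w x : sorted rr (x :: w) -> exists cs, size cs = size w /\ dec x cs = x :: w.
Proof.
elim: w x => [|y w IH] x /=; first by exists [::].
move=> /andP [xy Hp].
have [cs [Hs Hd]] := IH y Hp.
have : enum_rank y != enum_rank (inv x).
  by apply: contra xy => /eqP /enum_rank_inj ->; rewrite /rr eqxx.
rewrite eq_sym => /unlift_some [c Ec _].
exists (c :: cs); split; first by rewrite /= Hs.
by rewrite /= /nxt -Ec enum_rankK Hd.
Qed.

End Words.
Section Words2.
Variable n' : nat.
Hypothesis hn' : (0 < n')%N.
Local Notation N := n'.+1.
Local Notation Lt := (Lt n').

Lemma card_Lt : #|{: Lt}| = (n' * 2)%N.
Proof. by rewrite card_prod card_ord card_bool. Qed.

Lemma c0_proof : (0 < #|{: Lt}|.-1)%N.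
Proof. rewrite card_Lt; lia. Qed.

Definition c0 : 'I_#|{: Lt}|.-1 := Ordinal c0_proof.

Definition D2 R := ('I_R.+1 * Lt * (R.-tuple 'I_#|{: Lt}|.-1))%type.

Definition Fw R (y : D2 R) : pt N -> pt N :=
  let: (L, x, cs) := y in
  if nat_of_ord L == 0%N then (fun p => p) else eval (dec x (take (nat_of_ord L).-1 cs)).

Lemma card_D2 R : #|{: D2 R}| = (R.+1 * (n' * 2) * (n' * 2).-1 ^ R)%N.
Proof. by rewrite !card_prod card_ord card_tuple !card_ord card_bool. Qed.

Lemma Fw_surj R s L : word_of s L -> (L <= R)%N -> exists y : D2 R, Fw y = s.
Proof.
move=> /(word_eval hn') [w [Hw ->]] LR.
have [Hr Hsz He] := red_props hn' w.
move: Hr Hsz He.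
case: (red w) => [|x w'] Hr Hsz He.
  exists (ord0, (Ordinal hn', false), nseq_tuple R c0) => /=.
  by apply: functional_extensionality => p; rewrite -He.
have [cs [Hs Hd]] := dec_surj Hr.
have Lp : (size (x :: w') < R.+1)%N by rewrite ltnS; apply: leq_trans Hsz _; rewrite Hw.
have Tp : size (cs ++ nseq (R - size cs) c0) == R.
  by rewrite size_cat size_nseq Hs; apply/eqP; move: Lp => /=; lia.
exists (Ordinal Lp, x, Tuple Tp) => /=.
rewrite Hs -{1}Hs take_size_cat // Hd.
by apply: functional_extensionality => p; rewrite -He.
Qed.

End Words2.
Open Scope R_scope.

Lemma exp_le' x y : x <= y -> exp x <= exp y.
Proof. move=> H; case: (Rle_lt_or_eq_dec _ _ H) => [H'|->]; [left; exact: exp_increasing|right]; done. Qed.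

Lemma ln_le' x y : 0 < x -> x <= y -> ln x <= ln y.
Proof. move=> Hx H; case: (Rle_lt_or_eq_dec _ _ H) => [H'|->]; [left; exact: ln_increasing|right]; done. Qed.

Lemma exp_pow_INR a (m : nat) : exp a ^ m = exp (INR m * a).
Proof.
elim: m => [|m IH]; first by rewrite /= Rmult_0_l exp_0.
rewrite S_INR [exp a ^ _]/= IH -exp_plus; f_equal; ring.
Qed.

Lemma ln_le_x x : 0 < x -> ln x <= x - 1.
Proof. move=> Hx; have := exp_ineq1_le (ln x); rewrite exp_ln //; lra. Qed.

Lemma pow_k1 (k : nat) : INR k.+1 ^ k <= exp 1 * INR k ^ k.
Proof.
case: k => [|k]; first by rewrite /=; have := exp_ineq1_le 1; lra.
set x := INR k.+1.
have xp : 0 < x by rewrite /x S_INR; have := pos_INR k; lra.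
have H1 : INR k.+2 <= x * exp (/ x).
  have := exp_ineq1_le (/ x).
  rewrite (S_INR k.+1) -/x => H.
  have : x * (1 + / x) <= x * exp (/ x) by apply: Rmult_le_compat_l; lra.
  by rewrite Rmult_plus_distr_l Rinv_r ?Rmult_1_r; lra.
apply: Rle_trans (pow_incr _ _ k.+1 _) _.
  by split; [apply: pos_INR|exact: H1].
rewrite Rpow_mult_distr exp_pow_INR -/x Rinv_r; last by lra.
lra.
Qed.

Lemma fact_lb (k : nat) : INR k ^ k <= INR (k`!) * exp (INR k).
Proof.
elim: k => [|k IH]. by rewrite fact0 /= exp_0; lra.
rewrite factS mult_INR (S_INR k) exp_plus -S_INR.
rewrite -tech_pow_Rmult.
have hp := pos_INR k.+1.
have h1 := pow_k1 k.
have e1 := exp_pos 1.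
have h2 : exp 1 * INR k ^ k <= exp 1 * (INR k`! * exp (INR k)) by apply: Rmult_le_compat_l; lra.
have h3 : INR k.+1 ^ k <= INR k`! * exp (INR k) * exp 1 by lra.
have := Rmult_le_compat_l _ _ _ hp h3; lra.
Qed.

Lemma floor_ex r : exists R : nat, (forall L : nat, INR L <= r -> (L <= R)%N) /\ INR R <= Rabs r + 1.
Proof.
have [h1 h2] := archimed r.
exists (Z.to_nat (up r)); split.
  move=> L HL.
  have : IZR (Z.of_nat L) < IZR (up r) by rewrite -INR_IZR_INZ; lra.
  move/lt_IZR => H; apply/leP; lia.
have ha := Rle_abs r.
case: (Z_lt_le_dec (up r) 0) => H.
  have -> : Z.to_nat (up r) = 0%N by lia.
  by have := Rabs_pos r; rewrite /=; lra.
by rewrite INR_IZR_INZ Z2Nat.id //; lra.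
Qed.

Lemma INR_unb y : exists N : nat, y < INR N.
Proof.
have [N [HN _]] := floor_ex y.
exists N.+1; have : ~ INR N.+1 <= y by move=> /HN; rewrite ltnn.
lra.
Qed.

Lemma INR_expn m e : INR (m ^ e)%N = INR m ^ e.
Proof. elim: e => [|e IH]; first by rewrite expn0. by rewrite expnS mult_INR IH. Qed.
Lemma real_main (q : nat) (hq : (4 <= q)%N) (c d : nat -> nat)
  (Hc : forall k, (2 <= k)%N -> INR (k`!) <= INR k * INR (c k))
  (Hd : forall k, exists R : nat, INR R <= Rabs (INR k * (ln (INR k) / ln (INR q))) + 1 /\
          (d k <= R.+1 * q * q.-1 ^ R)%N) :
  Un_cv (fun k => INR (d k) / INR (c k)) 0.
Proof.
set Q := INR q; set B := INR q.-1.
have hQB : Q = B + 1 by rewrite /Q /B -S_INR prednK //; lia.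
have hB : 3 <= B.
  have : (3 <= q.-1)%N by lia.
  move/leP/le_INR; rewrite -/B /=; lra.
set lq := ln Q; set lb := ln B.
have lb0 : 0 < lb by rewrite /lb -ln_1; apply: ln_increasing; lra.
have lbq : lb < lq by apply: ln_increasing; lra.
set il := / lq.
have il0 : 0 < il by apply: Rinv_0_lt_compat; lra.
set al := lb * il.
set be := 1 - al.
have be0 : 0 < be.
  rewrite /be /al; have : lb * il < lq * il by apply: Rmult_lt_compat_r.
  rewrite /il Rinv_r; lra.
set A := il + 2; set C := A * Q * B.
have C0 : 0 < C by rewrite /C /A; apply: Rmult_lt_0_compat; [apply: Rmult_lt_0_compat|]; lra.
move=> eps Heps.
have [N HN] := INR_unb (Rmax (Rmax 2 (exp (4 / be))) (Rmax (6 / be) (C / eps))).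
exists N => k Hk.
set x := INR k.
have xN : INR N <= x by apply: le_INR.
have x2 : 2 < x by have := Rmax_l (Rmax 2 (exp (4 / be))) (Rmax (6 / be) (C / eps)); have := Rmax_l 2 (exp (4 / be)); lra.
have xe : exp (4 / be) <= x by have := Rmax_l (Rmax 2 (exp (4 / be))) (Rmax (6 / be) (C / eps)); have := Rmax_r 2 (exp (4 / be)); lra.
have x6 : 6 / be <= x by have := Rmax_r (Rmax 2 (exp (4 / be))) (Rmax (6 / be) (C / eps)); have := Rmax_l (6 / be) (C / eps); lra.
have xC : C / eps <= x by have := Rmax_r (Rmax 2 (exp (4 / be))) (Rmax (6 / be) (C / eps)); have := Rmax_r (6 / be) (C / eps); lra.
set Lk := ln x.
have L4 : 4 / be <= Lk by rewrite -(ln_exp (4 / be)); apply: ln_le' => //; apply: exp_pos.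
have bL : 4 <= be * Lk.
  have : be * (4 / be) <= be * Lk by apply: Rmult_le_compat_l; lra.
  by rewrite /Rdiv Rmult_comm Rmult_assoc Rinv_l; lra.
have bx : 6 <= be * x.
  have : be * (6 / be) <= be * x by apply: Rmult_le_compat_l; lra.
  by rewrite /Rdiv Rmult_comm Rmult_assoc Rinv_l; lra.
have Lk0 : 0 <= Lk.
  have : 0 < 4 / be by apply: Rdiv_lt_0_compat; lra.
  lra.
have Lkx : Lk <= x - 1 by apply: ln_le_x; lra.
have k2 : (2 <= k)%N by apply/leP; apply: INR_le; rewrite /=; rewrite -/x; lra.
have ex : exp Lk = x by rewrite /Lk exp_ln; lra.
have [R [HR Hdk]] := Hd k.
rewrite -/x -/Q -/lq in HR.
set r := x * (Lk / lq).
have r0 : 0 <= r by rewrite /r /Rdiv; apply: Rmult_le_pos; [lra|]; apply: Rmult_le_pos; [lra|]; rewrite -/il; lra.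
rewrite (Rabs_pos_eq _ r0) in HR.
have Dk1 : INR (d k) <= (INR R + 1) * Q * B ^ R.
  move/leP/le_INR: Hdk; by rewrite !mult_INR INR_expn S_INR.
have BR : B ^ R = exp (INR R * lb).
  by rewrite -[B ^ R]exp_ln ?ln_pow //; try lra; apply: pow_lt; lra.
have rlb : r * lb = al * x * Lk by rewrite /r /al /il /Rdiv; ring.
have BR2 : B ^ R <= exp (al * x * Lk) * B.
  rewrite BR -(exp_ln B); last by lra.
  rewrite -exp_plus -/lb; apply: exp_le'.
  have : INR R * lb <= (r + 1) * lb by apply: Rmult_le_compat_r; lra.
  lra.
have R1 : INR R + 1 <= A * (x * x).
  have : r <= x * x * il.
    rewrite /r /Rdiv -/il.
    have : x * Lk <= x * x by apply: Rmult_le_compat_l; lra.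
    move=> h; have := Rmult_le_compat_r _ _ _ (Rlt_le _ _ il0) h; lra.
  rewrite /A; nra.
have Dk2 : INR (d k) <= C * exp (2 * Lk + al * x * Lk).
  have e2 : exp (2 * Lk + al * x * Lk) = x * x * exp (al * x * Lk).
    by rewrite exp_plus (_ : 2 * Lk = Lk + Lk) ?exp_plus ?ex //; ring.
  rewrite e2 /C.
  apply: Rle_trans Dk1 _.
  have hBR0 : 0 <= B ^ R by apply: pow_le; lra.
  have hR0 : 0 <= INR R + 1 by have := pos_INR R; lra.
  have h1 : (INR R + 1) * Q * B ^ R <= A * (x * x) * Q * B ^ R.
    apply: Rmult_le_compat_r => //; apply: Rmult_le_compat_r; lra.
  have h2 : A * (x * x) * Q * B ^ R <= A * (x * x) * Q * (exp (al * x * Lk) * B).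
    apply: Rmult_le_compat_l => //.
    apply: Rmult_le_pos; [|lra]; apply: Rmult_le_pos; [rewrite /A; lra|nra].
  have : A * (x * x) * Q * (exp (al * x * Lk) * B) = A * Q * B * (x * x * exp (al * x * Lk)) by ring.
  lra.
have Ck1 : exp (x * Lk) <= x * INR (c k) * exp x.
  have h := fact_lb k; rewrite -/x in h.
  have hxk : x ^ k = exp (x * Lk).
    by rewrite -[x ^ k]exp_ln ?ln_pow //; try lra; apply: pow_lt; lra.
  rewrite -hxk; apply: Rle_trans h _.
  apply: Rmult_le_compat_r; first exact: Rlt_le (exp_pos _).
  exact: Hc.
have Ck2 : exp (x * Lk - Lk - x) <= INR (c k).
  have e3 : exp (x * Lk) = exp (x * Lk - Lk - x) * (x * exp x).
    have -> : x * exp x = exp (Lk + x) by rewrite exp_plus ex.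
    rewrite -exp_plus; f_equal; ring.
  rewrite e3 in Ck1.
  have hp : 0 < x * exp x by apply: Rmult_lt_0_compat; [lra|apply: exp_pos].
  have : exp (x * Lk - Lk - x) * (x * exp x) <= INR (c k) * (x * exp x) by lra.
  by move/(Rmult_le_reg_r _ _ _ hp).
have E0 := exp_pos (x * Lk - Lk - x).
have ratio : INR (d k) / INR (c k) <= C * exp (- x).
  have hd0 := pos_INR (d k).
  apply: Rle_trans (_ : INR (d k) / exp (x * Lk - Lk - x) <= _).
    apply: Rmult_le_compat_l => //; apply: Rinv_le_contravar => //.
  rewrite /Rdiv -exp_Ropp.
  apply: Rle_trans (_ : C * exp (2 * Lk + al * x * Lk) * exp (- (x * Lk - Lk - x)) <= _).
    by apply: Rmult_le_compat_r => //; apply: Rlt_le; apply: exp_pos.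
  rewrite Rmult_assoc -exp_plus; apply: Rmult_le_compat_l; first lra.
  apply: exp_le'.
  have : be * x * Lk >= 2 * x + 3 * Lk by nra.
  rewrite /be in be0 *; nra.
have ex1 : exp (- x) <= / (1 + x).
  rewrite exp_Ropp; apply: Rinv_le_contravar; first lra.
  exact: exp_ineq1_le.
rewrite /R_dist Rminus_0_r Rabs_pos_eq; last first.
  apply: Rmult_le_pos; first exact: pos_INR.
  apply: Rlt_le; apply: Rinv_0_lt_compat; apply: Rlt_le_trans (exp_pos _) Ck2.
apply: Rle_lt_trans ratio _.
apply: Rle_lt_trans (_ : C * / (1 + x) < _).
  by apply: Rmult_le_compat_l; lra.
have hx1 : 0 < 1 + x by lra.
have : C <= eps * x.
  have : eps * (C / eps) <= eps * x by apply: Rmult_le_compat_l; lra.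
  by rewrite /Rdiv Rmult_comm Rmult_assoc Rinv_l; lra.
move=> h; apply: (Rmult_lt_reg_r (1 + x)) => //.
rewrite Rmult_assoc Rinv_l; lra.
Qed.

Theorem mainTheorem6 (n : nat) (hn : (3 <= n)%N) :
  exists c d : nat -> nat,
    (forall k, has_card (@Cset n k) (c k) /\ has_card (@Dset n k) (d k)) /\
    Un_cv (fun k => Rdiv (INR (d k)) (INR (c k))) R0.
Proof.
case: n hn => [//|n'] hn.
have hn' : (0 < n')%N by lia.
have HC : forall k, exists c, has_card (@Cset n'.+1 k) c.
  move=> k.
  have [c [_ Hc]] := has_card_fin (P := @Cset n'.+1 k) (f := @decC n'.+1 k) (fun s Hs => decC_surj Hs).
  by exists c.
have qE : (2 * n'.+1 - 2 = n' * 2)%N by lia.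
have HD : forall k, exists dd, has_card (@Dset n'.+1 k) dd /\
    exists R : nat, INR R <= Rabs (INR k * (ln (INR k) / ln (INR (2 * n'.+1 - 2)%N))) + 1 /\
      (dd <= R.+1 * (2 * n'.+1 - 2) * (2 * n'.+1 - 2).-1 ^ R)%N.
  move=> k.
  have [R [HR1 HR2]] := floor_ex (INR k * (ln (INR k) / ln (INR (2 * n'.+1 - 2)%N))).
  have cov : forall s, Dset k s -> exists y, @Fw n' R y = s.
    move=> s [_ [L [HL HLr]]]. have h := HR1 _ HLr. have := (Fw_surj hn' HL h). by [].
  have [dd [Hdd Hcard]] := has_card_fin cov.
  exists dd; split => //; exists R; split => //.
  by rewrite card_D2 in Hdd; rewrite qE.
pose c k := proj1_sig (constructive_indefinite_description _ (HC k)).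
pose d k := proj1_sig (constructive_indefinite_description _ (HD k)).
have cP k : has_card (@Cset n'.+1 k) (c k) by rewrite /c; case: constructive_indefinite_description.
have dP k : has_card (@Dset n'.+1 k) (d k) by rewrite /d; case: constructive_indefinite_description => ? [].
have dB k : exists R : nat, INR R <= Rabs (INR k * (ln (INR k) / ln (INR (2 * n'.+1 - 2)%N))) + 1 /\
      (d k <= R.+1 * (2 * n'.+1 - 2) * (2 * n'.+1 - 2).-1 ^ R)%N.
  by rewrite /d; case: constructive_indefinite_description => ? [].
exists c, d; split; first by move=> k; split.
apply: real_main dB.
  lia.
move=> k k2.
case: k k2 => [|j] // j2.
have j1 : (0 < j)%N by lia.
have := card_lower (cP j.+1) (@sfam_C n'.+1 ord0 j j1) (@sfam_inj n'.+1 ord0 j).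
rewrite card_Sn => H.
rewrite factS mult_INR; apply: Rmult_le_compat_l; first exact: pos_INR.
by apply: le_INR; apply/leP.
Qed.
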